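(* Let $\mathcal{G}$ be a connected undirected graph with $n$ nodes, $m$ edges and incidence matrix $B$; let $p\ge1$, $E=\begin{bmatrix} I_{p}\\ \mathbf{0}_{(n-p)\times p}\end{bmatrix}$, $d\in\mathbb{R}^n$, $Q=\operatorname{diag}(q_1,\dots,q_p)$ with $q_i>0$, $r\in\mathbb{R}^p$, $s\in\mathbb{R}$ and $C(u)=\frac12u^TQu+r^Tu+s$. Let $h(x)=(h_1(x_1),\dots,h_n(x_n))^T$, let $B_c\in\mathbb{R}^{n\times l}$ be the incidence matrix of a (not necessarily connected) graph on the same node set, let $E_c\in\mathbb{R}^{n\times p_c}$ be a matrix whose columns are distinct standard unit vectors of $\mathbb{R}^n$, let $\gamma:\mathbb{R}^l\to\mathbb{R}^l$ and $\eta:\mathbb{R}^{p_c}\to\mathbb{R}^{p_c}$ act componentwise, and define $\Psi(x)=-B_c\gamma(B_c^Th(x))-E_c\eta(E_c^Th(x))$. Fix $\overline x\in\mathbb{R}^n$. Then the solution (in the variable $u$) of $$\min_{u,\lambda}C(u)\quad\text{subject to}\quad\mathbf{0}=\Psi(\overline x)-B\lambda+Eu-d$$ is given by $\hat u=Q^{-1}(\hat\kappa-r)$, where $\hat\kappa=E^T\frac{\mathbb{1}_n\mathbb{1}_n^T}{\mathbb{1}_p^TQ^{-1}\mathbb{1}_p}(\hat d+EQ^{-1}r)$ and $\hat d=d+E_c\eta(E_c^Th(\overline x))$.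
   Context: $\mathbb{1}_k$ is the all-ones vector of length $k$. An incidence matrix is obtained by arbitrarily orienting each edge: entry $(i,k)$ is $+1$ if node $i$ is the positive end of edge $k$, $-1$ if the negative end, $0$ otherwise. ''Acts componentwise'' means $\gamma(a)=(\gamma_1(a_1),\dots,\gamma_l(a_l))^T$ and similarly for $\eta$. *)

(* Defs.v *)
From HB Require Import structures.
From mathcomp Require Import all_boot all_order all_algebra.
Set Implicit Arguments. Unset Strict Implicit. Unset Printing Implicit Defensive.
Import Order.TTheory GRing.Theory Num.Theory.
Local Open Scope ring_scope.

(* A graph on node set 'I_n with m edges, each edge k given with an arbitrary
   orientation (e k).1 (positive end) -> (e k).2 (negative end). *)
Definition edge_list (n m : nat) := 'I_m -> 'I_n * 'I_n.

Definition simple_graph n m (e : edge_list n m) : Prop :=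
  (forall k, (e k).1 != (e k).2) /\
  (forall k k', k != k' ->
     e k' != e k /\ e k' != ((e k).2, (e k).1)).

Definition adjacent n m (e : edge_list n m) : rel 'I_n :=
  fun i j => [exists k, (e k == (i, j)) || (e k == (j, i))].

Definition connected_graph n m (e : edge_list n m) : Prop :=
  forall i j : 'I_n, connect (adjacent e) i j.

Definition incidence (R : nzRingType) n m (e : edge_list n m) : 'M[R]_(n, m) :=
  \matrix_(i, k) (if i == (e k).1 then 1 else if i == (e k).2 then -1 else 0).

Definition Emat (R : nzRingType) n p : 'M[R]_(n, p) :=
  \matrix_(i, j) (if (i : nat) == (j : nat) then 1 else 0).

Definition unit_cols (R : nzRingType) n pc (sel : 'I_pc -> 'I_n) : 'M[R]_(n, pc) :=
  \matrix_(i, j) (if i == sel j then 1 else 0).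

Definition compw (R : Type) k (f : 'I_k -> R -> R) (v : 'cV[R]_k) : 'cV[R]_k :=
  \col_i f i (v i ord0).

Definition ones (R : nzRingType) k : 'cV[R]_k := const_mx 1.

Definition costC (R : fieldType) p (Q : 'M[R]_p) (r : 'cV[R]_p) (s : R)
  (u : 'cV[R]_p) : R :=
  (u^T *m Q *m u) ord0 ord0 / 2 + (r^T *m u) ord0 ord0 + s.

Definition Psi (R : nzRingType) n l pc (Bc : 'M[R]_(n, l)) (Ec : 'M[R]_(n, pc))
  (h : 'I_n -> R -> R) (gamma : 'I_l -> R -> R) (eta : 'I_pc -> R -> R)
  (x : 'cV[R]_n) : 'cV[R]_n :=
  - (Bc *m compw gamma (Bc^T *m compw h x)) - (Ec *m compw eta (Ec^T *m compw h x)).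

(* Main.v *)
Require Import Defs.
From HB Require Import structures.
From mathcomp Require Import all_boot all_order all_algebra.
Import Order.TTheory GRing.Theory Num.Theory.
Local Open Scope ring_scope.

Lemma inc_entry (R : nzRingType) n m (e : edge_list n m)
  (Hl : forall k, (e k).1 != (e k).2) i k :
  incidence R e i k = (i == (e k).1)%:R - (i == (e k).2)%:R.
Proof.
rewrite mxE; have H := Hl k.
case: (i =P (e k).1) => [E1|_]; case: (i =P (e k).2) => [E2|_] //=.
- by move: H; rewrite -E1 -E2 eqxx.
- by rewrite subr0.
- by rewrite sub0r.
- by rewrite subr0.
Qed.

Lemma sum_delta (R : nzRingType) n (x : 'I_n -> R) a :
  \sum_i x i * (i == a)%:R = x a.
Proof.
rewrite (bigD1 a) //= eqxx mulr1 big1 ?addr0 // => i /negPf ->.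
by rewrite mulr0.
Qed.

Lemma inc_colsum (R : nzRingType) n m (e : edge_list n m)
  (Hl : forall k, (e k).1 != (e k).2) k :
  \sum_i incidence R e i k = 0.
Proof.
under eq_bigr => i _ do rewrite (@inc_entry R _ _ e Hl) -[_ - _]mul1r.
rewrite (eq_bigr (fun i => 1 * (i == (e k).1)%:R - 1 * (i == (e k).2)%:R)).
  by rewrite big_split /= sumrN !(@sum_delta R _ (fun _ => 1)) subrr.
by move=> i _; rewrite mulrBr.
Qed.

Lemma ones_inc (R : nzRingType) n m (e : edge_list n m)
  (Hl : forall k, (e k).1 != (e k).2) :
  (ones R n)^T *m incidence R e = 0.
Proof.
apply/matrixP => i k; rewrite !mxE.
transitivity (\sum_j incidence R e j k); last exact: inc_colsum.
by apply: eq_bigr => j _; rewrite !mxE mul1r.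
Qed.

Lemma ker_const (R : nzRingType) n m (e : edge_list n m)
  (Hl : forall k, (e k).1 != (e k).2) (Hc : connected_graph e)
  (x : 'rV[R]_n) : x *m incidence R e = 0 -> forall i j, x 0 i = x 0 j.
Proof.
move=> Hx.
have Hk k : x 0 (e k).1 = x 0 (e k).2.
  have := congr1 (fun M : 'M[R]_(1,m) => M 0 k) Hx; rewrite !mxE.
  under eq_bigr => i _ do rewrite (@inc_entry R _ _ e Hl) mulrBr.
  rewrite big_split /= sumrN !(@sum_delta R) => /eqP; rewrite subr_eq0 => /eqP //.
have Hadj i j : adjacent e i j -> x 0 i = x 0 j.
  by move=> /existsP [k /orP [] /eqP Ek]; have := Hk k; rewrite Ek /= => ->.
move=> i j; have /connectP [pth Hp ->] := Hc i j.
elim: pth i Hp => [|y pth IH] i //= /andP [Hiy Hp].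
by rewrite (Hadj _ _ Hiy) IH.
Qed.

From mathcomp Require Import zify ring.

Lemma inc_range (R : fieldType) n m (e : edge_list n m)
  (Hl : forall k, (e k).1 != (e k).2) (Hc : connected_graph e)
  (n0 : (0 < n)%N) (v : 'cV[R]_n) :
  \sum_i v i ord0 = 0 -> exists lam, incidence R e *m lam = v.
Proof.
move=> Hv.
set B := incidence R e.
set W := kermx (ones R n).
have rk1 : \rank (ones R n) = 1%N.
  rewrite -mxrank_tr rank_rV; case: eqP => // /matrixP /(_ 0 (Ordinal n0)) /eqP.
  by rewrite !mxE oner_eq0.
have rkW : \rank W = n.-1 by rewrite mxrank_ker rk1 subn1.
have BW : (B^T <= W)%MS.
  apply/sub_kermxP; rewrite -[ones R n]trmxK -trmx_mul.
  by rewrite /B ones_inc // trmx0.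
have KB : (kermx B <= (ones R n)^T)%MS.
  apply/row_subP => i.
  have Hr : row i (kermx B) *m B = 0 by rewrite -row_mul mulmx_ker row0.
  have Hc' := @ker_const R _ _ e Hl Hc _ Hr.
  have -> : row i (kermx B) = (row i (kermx B)) 0 (Ordinal n0) *: (ones R n)^T.
    apply/matrixP => a b; rewrite !mxE mulr1.
    have := Hc' b (Ordinal n0); rewrite !mxE => ->; done.
  exact/scalemx_sub/submx_refl.
have rkB : (n.-1 <= \rank B^T)%N.
  have := mxrankS KB; rewrite mxrank_ker !mxrank_tr rk1; lia.
have WB : (W <= B^T)%MS.
  by rewrite -(geq_leqif (mxrank_leqif_sup BW)) rkW.
have vW : (v^T <= W)%MS.
  apply/sub_kermxP; apply/matrixP => a b; rewrite !mxE; transitivity (\sum_i v i ord0); last exact: Hv.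
  by apply: eq_bigr => j _; rewrite /ones !mxE (ord1 a) mulr1.
have /submxP [D HD] := submx_trans vW WB.
exists D^T; by rewrite -[v]trmxK HD trmx_mul trmxK.
Qed.
Lemma onesE_sum (R : nzRingType) k (x : 'cV[R]_k) :
  ((ones R k)^T *m x) ord0 ord0 = \sum_i x i ord0.
Proof. by rewrite !mxE; apply: eq_bigr => i _; rewrite /ones !mxE mul1r. Qed.

Lemma onesE (R : nzRingType) n p (Hpn : (p <= n)%N) :
  (ones R n)^T *m Emat R n p = (ones R p)^T.
Proof.
apply/matrixP => a j; rewrite !mxE.
have jn : (j < n)%N by apply: leq_trans (ltn_ord j) Hpn.
rewrite (bigD1 (Ordinal jn)) //= big1 ?addr0.
  by rewrite /ones !mxE eqxx mulr1.
move=> i Hi; rewrite /ones !mxE; case: eqP => [Eij|]; last by rewrite mulr0.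
by move: Hi; rewrite -val_eqE /= Eij eqxx.
Qed.

Lemma EtonesE (R : comNzRingType) n p (Hpn : (p <= n)%N) :
  (Emat R n p)^T *m ones R n = ones R p.
Proof.
by rewrite -(trmxK (ones R p)) -(@onesE R n p Hpn) trmx_mul trmxK.
Qed.

Lemma inv_diag (R : fieldType) p (q : 'rV[R]_p) (Hq : forall j, q ord0 j != 0) :
  invmx (diag_mx q) = diag_mx (\row_j (q ord0 j)^-1).
Proof.
have H1 : diag_mx q *m diag_mx (\row_j (q ord0 j)^-1) = 1%:M.
  apply/matrixP => i j; rewrite mul_diag_mx !mxE.
  case: eqP => [->|]; last by rewrite mulr0.
  by rewrite mulr1n mulfV.
have [U _] := mulmx1_unit H1.
by rewrite -[RHS](mulKmx U) H1 mulmx1.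
Qed.

Lemma costE (R : fieldType) p (q : 'rV[R]_p) r s (v : 'cV[R]_p) :
  costC (diag_mx q) r s v =
  \sum_j (q ord0 j * v j ord0 ^+ 2 / 2 + r j ord0 * v j ord0) + s.
Proof.
rewrite /costC big_split /=; congr (_ + _ + _).
  rewrite [X in X / 2]mxE mulr_suml; apply: eq_bigr => j _.
  rewrite mul_mx_diag !mxE; congr (_ / _).
  by rewrite expr2 mulrA [v j _ * q ord0 j]mulrC.
by rewrite !mxE; apply: eq_bigr => j _; rewrite !mxE.
Qed.

Lemma zmod_id (V : zmodType) (X Y Z d : V) :
  0 = - X - Y - (Z - (d + Y) - X) + Z - d.
Proof.
rewrite ?opprB ?opprD ?opprK ?addrA.
by rewrite subrK [- X - Y + X]addrAC addNr add0r [- Y + d + Y]addrAC addNr add0r subrr.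
Qed.

Lemma mxEadd (R : nzRingType) a b (A B : 'M[R]_(a, b)) i j :
  (A + B) i j = A i j + B i j.
Proof. by rewrite mxE. Qed.

Lemma mxEsub (R : nzRingType) a b (A B : 'M[R]_(a, b)) i j :
  (A - B) i j = A i j - B i j.
Proof. by rewrite !mxE. Qed.

Lemma zmod_feas (V : zmodType) (X Y Z W d : V) :
  0 = - X - Y - W + Z - d -> Z = d + (X + Y + W).
Proof.
move/eqP; rewrite eq_sym subr_eq add0r -!opprD [- _ + Z]addrC subr_eq.
by move/eqP.
Qed.

Theorem lemma8 (R : realFieldType) (n m p l pc : nat)
  (e : edge_list n m) (ec : edge_list n l) (sel : 'I_pc -> 'I_n)
  (q : 'rV[R]_p) (r : 'cV[R]_p) (s : R) (d : 'cV[R]_n)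
  (h : 'I_n -> R -> R) (gamma : 'I_l -> R -> R) (eta : 'I_pc -> R -> R)
  (xbar : 'cV[R]_n) :
  simple_graph e -> connected_graph e ->
  simple_graph ec ->
  injective sel ->
  (1 <= p)%N -> (p <= n)%N ->
  (forall i, 0 < q ord0 i) ->
  let B := incidence R e in
  let E := Emat R n p in
  let Bc := incidence R ec in
  let Ec := unit_cols R sel in
  let Q := diag_mx q in
  let C := costC Q r s in
  let feasible (u : 'cV[R]_p) :=
    exists lambda : 'cV[R]_m,
      0 = Psi Bc Ec h gamma eta xbar - B *m lambda + E *m u - d in
  let dhat := d + Ec *m compw eta (Ec^T *m compw h xbar) in
  let kappahat :=
    (((ones R p)^T *m invmx Q *m ones R p) ord0 ord0)^-1
      *: (E^T *m (ones R n *m (ones R n)^T) *m (dhat + E *m invmx Q *m r)) in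
  let uhat := invmx Q *m (kappahat - r) in
  forall u : 'cV[R]_p,
    (feasible u /\ (forall v, feasible v -> C u <= C v)) <-> u = uhat.
Proof.
move=> He Hc Hec Hsel Hp1 Hpn Hq B E Bc Ec Q C feasible dhat kappahat uhat u.
have Hl : forall k, (e k).1 != (e k).2 by move=> k; case: He => H _; exact: H.
have Hlc : forall k, (ec k).1 != (ec k).2 by move=> k; case: Hec => H _; exact: H.
have n0 : (0 < n)%N by apply: leq_trans Hpn.
have Hq0 j : q ord0 j != 0 by rewrite gt_eqF ?Hq.
set O := (ones R n)^T.
set Dh := \sum_i dhat i ord0.
have OB : O *m B = 0 by exact: ones_inc.
have OBc : O *m Bc = 0 by exact: ones_inc.
have OE (v : 'cV[R]_p) : (O *m (E *m v)) ord0 ord0 = \sum_j v j ord0.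
  by rewrite mulmxA /O onesE // onesE_sum.
set g := compw gamma (Bc^T *m compw h xbar).
set Y := Ec *m compw eta (Ec^T *m compw h xbar).
have feasE (v : 'cV[R]_p) : feasible v <-> \sum_j v j ord0 = Dh.
  split.
  - move=> [lam Hlam].
    rewrite /Psi -/g -/Y in Hlam; have := @zmod_feas _ _ _ _ _ _ Hlam => /(congr1 (fun M => O *m M)).
    rewrite !mulmxDr !mulmxA OB OBc !mul0mx !addr0 add0r -!mulmxA -mulmxDr.
    move/(congr1 (fun M : 'M[R]_(1,1) => M ord0 ord0)).
    by rewrite OE /O onesE_sum.
  - move=> Hv.
    have H1 : O *m (E *m v) = O *m dhat.
      by apply/matrixP => i j; rewrite !ord1 OE Hv onesE_sum.
    have [lam Hlam] : exists lam, B *m lam = E *m v - dhat - Bc *m g.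
      apply: inc_range => //; rewrite -onesE_sum.
      by rewrite !mulmxBr H1 subrr mulmxA OBc mul0mx subr0 mxE.
    exists lam; rewrite Hlam /Psi -/g -/Y /dhat.
    exact: zmod_id.
set qi := \row_j (q ord0 j)^-1.
have iQ : invmx Q = diag_mx qi by exact: inv_diag.
set S := \sum_j (q ord0 j)^-1.
set T := \sum_j (q ord0 j)^-1 * r j ord0.
have S_gt0 : 0 < S.
  rewrite /S (bigD1 (Ordinal Hp1)) //=; apply: ltr_pwDl.
    by rewrite invr_gt0.
  by apply: sumr_ge0 => j _; rewrite invr_ge0 ltW.
have SE : ((ones R p)^T *m invmx Q *m ones R p) ord0 ord0 = S.
  rewrite iQ -mulmxA mul_diag_mx onesE_sum; apply: eq_bigr => j _.
  by rewrite !mxE mulr1.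
have OwE : (O *m (dhat + E *m invmx Q *m r)) ord0 ord0 = Dh + T.
  rewrite mulmxDr mxEadd onesE_sum -mulmxA OE; congr (_ + _).
  by apply: eq_bigr => j _; rewrite iQ mul_diag_mx !mxE.
set kap := S^-1 * (Dh + T).
have kE j : kappahat j ord0 = kap.
  rewrite /kappahat SE mxE [E^T *m (_ *m _)]mulmxA /E EtonesE //.
  rewrite -mulmxA mxE big_ord1 /ones mxE mul1r -/O -/E OwE.
  by [].
have uE j : uhat j ord0 = (q ord0 j)^-1 * (kap - r j ord0).
  by rewrite /uhat iQ mul_diag_mx mxE [qi _ _]mxE mxEsub kE.
have Key j : q ord0 j * uhat j ord0 + r j ord0 = kap.
  by rewrite uE mulrA mulfV // mul1r subrK.
have Suh : \sum_j uhat j ord0 = Dh.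
  under eq_bigr => j _ do rewrite uE mulrBr.
  rewrite sumrB -mulr_suml -/S -/T /kap mulrA mulfV ?gt_eqF // mul1r addrK.
  by [].
set G := fun v : 'cV[R]_p =>
  \sum_j (q ord0 j * (v j ord0 - uhat j ord0) ^+ 2 / 2).
have Gt (v : 'cV[R]_p) (j : 'I_p) : 0 <= q ord0 j * (v j ord0 - uhat j ord0) ^+ 2 / 2.
  apply: divr_ge0; last exact: ler0n.
  apply: mulr_ge0; [exact: ltW (Hq j) | exact: sqr_ge0].
have Gge (v : 'cV[R]_p) : 0 <= G v by apply: sumr_ge0 => j _; exact: Gt.
have diffE (v : 'cV[R]_p) : \sum_j v j ord0 = Dh -> C v = C uhat + G v.
  move=> Hv; rewrite /C /Q !costE /G.
  have -> : \sum_j (q ord0 j * v j ord0 ^+ 2 / 2 + r j ord0 * v j ord0) =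
     \sum_j ((q ord0 j * uhat j ord0 ^+ 2 / 2 + r j ord0 * uhat j ord0)
       + q ord0 j * (v j ord0 - uhat j ord0) ^+ 2 / 2
       + kap * (v j ord0 - uhat j ord0)).
    by apply: eq_bigr => j _; rewrite -(Key j); field.
  rewrite !big_split /= -mulr_sumr sumrB Hv Suh subrr mulr0 addr0.
  by rewrite [LHS]addrAC.
split.
- move=> [Fu Opt].
  have Hu := (feasE u).1 Fu.
  have Fh : feasible uhat := (feasE uhat).2 Suh.
  have := Opt _ Fh; rewrite (diffE u Hu) -[X in _ <= X]addr0 lerD2l => HG.
  have G0 : G u = 0 by apply/eqP; rewrite eq_le HG Gge.
  apply/matrixP => j k; rewrite (ord1 k).
  have := psumr_eq0P (fun j _ => Gt u j) G0 (i := j) isT.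
  move/eqP; rewrite mulf_eq0 invr_eq0 pnatr_eq0 orbF mulf_eq0 (negbTE (Hq0 j)) /=.
  by rewrite sqrf_eq0 subr_eq0 => /eqP.
- move=> ->; split; first exact: (feasE uhat).2 Suh.
  by move=> v Fv; rewrite (diffE v ((feasE v).1 Fv)) lerDl.
Qed.
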